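(* Let $(\mathfrak{g},\theta)$ be a nilpotent symplectic Lie algebra over $\mathbb{R}$ and let $\nabla$ be the affine structure on $\mathfrak{g}$ defined by the symplectic cocycle $\theta$, i.e. $\nabla(X,Y)$ is the unique vector with $\theta(\nabla(X,Y),Z)=-\theta(Y,[X,Z])$ for all $Z\in\mathfrak{g}$. Let $\widetilde{\mathfrak{g}}=\mathfrak{g}\oplus\mathbb{R}$ with bracket $[(X,\alpha),(Y,\lambda)]=([X,Y],\theta(X,Y))$; this is a nilpotent contact Lie algebra with center $Z(\widetilde{\mathfrak{g}})=\{0\}\oplus\mathbb{R}$ and $\widetilde{\mathfrak{g}}/Z(\widetilde{\mathfrak{g}})\cong\mathfrak{g}$. Let $\pi:\widetilde{\mathfrak{g}}\to\mathfrak{g}$, $\pi(X,\alpha)=X$. Suppose $\widetilde{\nabla}$ is an affine structure on $\widetilde{\mathfrak{g}}$ extending $\nabla$, in the sense that $\pi(\widetilde{\nabla}((X,0),(Y,0)))=\nabla(X,Y)$ for all $X,Y\in\mathfrak{g}$. Then $\pi(\widetilde{\nabla}((X,0),T))=0$ for all $X\in\mathfrak{g}$ and all $T\in Z(\widetilde{\mathfrak{g}})$.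
   Context: A symplectic Lie algebra is a Lie algebra with a nondegenerate skew-symmetric bilinear form $\theta$ satisfying $\theta([X,Y],Z)+\theta([Y,Z],X)+\theta([Z,X],Y)=0$. An affine structure on a Lie algebra $\mathfrak{h}$ over $\mathbb{R}$ is a bilinear map $\nabla:\mathfrak{h}\times\mathfrak{h}\to\mathfrak{h}$ with $\nabla(X,Y)-\nabla(Y,X)=[X,Y]$ and $\nabla(X,\nabla(Y,Z))-\nabla(Y,\nabla(X,Z))=\nabla([X,Y],Z)$ for all $X,Y,Z\in\mathfrak{h}$; the map $\nabla$ defined from $\theta$ in the claim is such a structure. A contact Lie algebra of dimension $2p+1$ is one admitting $\omega\in\mathfrak{g}^*$ with $\omega\wedge(d\omega)^p\neq0$. *)

(* Defs.v *)
From mathcomp Require Import all_boot all_order all_algebra.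
From mathcomp Require Import reals.
Set Implicit Arguments. Unset Strict Implicit. Unset Printing Implicit Defensive.
Import GRing.Theory Num.Theory.
Local Open Scope ring_scope.

Definition bilinear_map (R : ringType) (V W : lmodType R) (f : V -> V -> W) : Prop :=
  (forall (a : R) x y z, f (a *: x + y) z = a *: f x z + f y z) /\
  (forall (a : R) x y z, f z (a *: x + y) = a *: f z x + f z y).

Definition bilinear_form (R : comRingType) (V : lmodType R) (f : V -> V -> R) : Prop :=
  (forall (a : R) x y z, f (a *: x + y) z = a * f x z + f y z) /\
  (forall (a : R) x y z, f z (a *: x + y) = a * f z x + f z y).

Definition is_lie_bracket (R : ringType) (V : lmodType R) (br : V -> V -> V) : Prop :=
  [/\ bilinear_map br, (forall x, br x x = 0) &
      (forall x y z, br x (br y z) + br y (br z x) + br z (br x y) = 0)].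

(* Nilpotent: C^k(g) = 0 for some k, i.e. every left-nested bracket
   [x_1,[x_2,...,[x_k,y]...]] with k brackets vanishes. *)
Definition lie_nilpotent (R : ringType) (V : lmodType R) (br : V -> V -> V) : Prop :=
  exists k : nat, forall (xs : seq V) (y : V),
    size xs = k -> foldr br y xs = 0.

Definition is_symplectic_form (R : comRingType) (V : lmodType R)
    (br : V -> V -> V) (th : V -> V -> R) : Prop :=
  [/\ bilinear_form th,
      (forall x y, th x y = - th y x),
      (forall x, (forall y, th x y = 0) -> x = 0) &
      (forall x y z, th (br x y) z + th (br y z) x + th (br z x) y = 0)].

Definition is_affine_structure (R : ringType) (V : lmodType R)
    (br : V -> V -> V) (nab : V -> V -> V) : Prop :=
  [/\ bilinear_map nab,
      (forall x y, nab x y - nab y x = br x y) &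
      (forall x y z, nab x (nab y z) - nab y (nab x z) = nab (br x y) z)].

Definition ext_bracket (R : realType) (n : nat) (br : 'rV[R]_n -> 'rV[R]_n -> 'rV[R]_n)
    (th : 'rV[R]_n -> 'rV[R]_n -> R) (p q : ('rV[R]_n * R^o)%type) : ('rV[R]_n * R^o)%type :=
  (br p.1 q.1, th p.1 q.1).

(* Main.v *)
Require Import Defs.
From mathcomp Require Import all_boot all_order all_algebra.
From mathcomp Require Import reals.
From mathcomp Require Import ring lra.
From Stdlib Require Import Classical.
Set Implicit Arguments. Unset Strict Implicit. Unset Printing Implicit Defensive.
Import GRing.Theory Num.Theory.
Local Open Scope ring_scope.

Lemma dbl0 (V : zmodType) (x : V) : x = x + x -> x = 0.
Proof. by move=> h; have := congr1 (fun y => y - x) h; rewrite addrK subrr. Qed.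

Section BM.
Variables (R : ringType) (V W : lmodType R) (f : V -> V -> W).
Hypothesis hf : bilinear_map f.
Let h1 := proj1 hf. Let h2 := proj2 hf.
Lemma bm0l z : f 0 z = 0.
Proof. apply: dbl0; have := (h1 1 0 0 z); rewrite !scale1r addr0; apply. Qed.
Lemma bm0r z : f z 0 = 0.
Proof. apply: dbl0; have := (h2 1 0 0 z); rewrite !scale1r addr0; apply. Qed.
Lemma bmDl x y z : f (x + y) z = f x z + f y z.
Proof. by have := (h1 1 x y z); rewrite !scale1r. Qed.
Lemma bmDr x y z : f z (x + y) = f z x + f z y.
Proof. by have := (h2 1 x y z); rewrite !scale1r. Qed.
Lemma bmZl a x z : f (a *: x) z = a *: f x z.
Proof. by have := (h1 a x 0 z); rewrite addr0 bm0l addr0. Qed.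
Lemma bmZr a x z : f z (a *: x) = a *: f z x.
Proof. by have := (h2 a x 0 z); rewrite addr0 bm0r addr0. Qed.
Lemma bmNl x z : f (- x) z = - f x z.
Proof. by rewrite -scaleN1r bmZl scaleN1r. Qed.
Lemma bmNr x z : f z (- x) = - f z x.
Proof. by rewrite -scaleN1r bmZr scaleN1r. Qed.
Lemma bmBl x y z : f (x - y) z = f x z - f y z.
Proof. by rewrite bmDl bmNl. Qed.
Lemma bmBr x y z : f z (x - y) = f z x - f z y.
Proof. by rewrite bmDr bmNr. Qed.
End BM.

Section BF.
Variables (R : comRingType) (V : lmodType R) (f : V -> V -> R).
Hypothesis hf : bilinear_form f.
Let h1 := proj1 hf. Let h2 := proj2 hf.
Lemma bf0l z : f 0 z = 0.
Proof. apply: dbl0; have := (h1 1 0 0 z); rewrite !scale1r addr0 mul1r; apply. Qed.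
Lemma bf0r z : f z 0 = 0.
Proof. apply: dbl0; have := (h2 1 0 0 z); rewrite !scale1r addr0 mul1r; apply. Qed.
Lemma bfDl x y z : f (x + y) z = f x z + f y z.
Proof. by have := (h1 1 x y z); rewrite !scale1r mul1r. Qed.
Lemma bfDr x y z : f z (x + y) = f z x + f z y.
Proof. by have := (h2 1 x y z); rewrite !scale1r mul1r. Qed.
Lemma bfZl a x z : f (a *: x) z = a * f x z.
Proof. by have := (h1 a x 0 z); rewrite addr0 bf0l addr0. Qed.
Lemma bfZr a x z : f z (a *: x) = a * f z x.
Proof. by have := (h2 a x 0 z); rewrite addr0 bf0r addr0. Qed.
Lemma bfNl x z : f (- x) z = - f x z.
Proof. by rewrite -scaleN1r bfZl mulN1r. Qed.
Lemma bfNr x z : f z (- x) = - f z x.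
Proof. by rewrite -scaleN1r bfZr mulN1r. Qed.
Lemma bfBl x y z : f (x - y) z = f x z - f y z.
Proof. by rewrite bfDl bfNl. Qed.
Lemma bfBr x y z : f z (x - y) = f z x - f z y.
Proof. by rewrite bfDr bfNr. Qed.
End BF.

Lemma lin_coord (F : fieldType) m (g : 'rV[F]_m -> F) :
  (forall k x y, g (k *: x + y) = k * g x + g y) ->
  forall x, g x = \sum_(i < m) x 0 i * g (delta_mx 0 i).
Proof.
move=> hg x.
have g0 : g 0 = 0 by apply: dbl0; have := hg 1 0 0; rewrite !scale1r addr0 mul1r; apply.
have gD : forall x y, g (x + y) = g x + g y by move=> u w; rewrite -[u]scale1r hg mul1r scale1r.
have gZ : forall k x, g (k *: x) = k * g x by move=> k u; rewrite -[k *: u]addr0 hg g0 addr0.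
rewrite {1}(row_sum_delta x) (big_morph g gD g0).
by apply: eq_bigr => i _; rewrite gZ.
Qed.

Lemma ker2 (F : fieldType) m (d a : 'rV[F]_m -> F) : (2 < m)%N ->
  (forall k x y, d (k *: x + y) = k * d x + d y) ->
  (forall k x y, a (k *: x + y) = k * a x + a y) ->
  exists x, x != 0 /\ d x = 0 /\ a x = 0.
Proof.
move=> hm hd ha.
pose M := \matrix_(i < m, k < 2) (if (k : nat) == 0%N then d (delta_mx 0 i) else a (delta_mx 0 i)).
have hK : kermx M != 0.
  rewrite -mxrank_eq0 mxrank_ker subn_eq0 -ltnNge.
  exact: leq_ltn_trans (rank_leq_col M) hm.
have [i hi] : exists i, row i (kermx M) != 0.
  apply/existsP; apply: contraR hK => /existsPn h; apply/eqP/row_matrixP => i.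
  by have := h i; rewrite negbK linear0 => /eqP ->.
have hx : row i (kermx M) *m M = 0 by apply/sub_kermxP; exact: row_sub.
exists (row i (kermx M)); split => //; split.
  rewrite (lin_coord hd); have h := congr1 (fun A : 'M[F]_(1,2) => A 0 0) hx; rewrite !mxE in h.
  by apply: (etrans _ h); apply: eq_bigr => j _; rewrite !mxE.
rewrite (lin_coord ha); have h := congr1 (fun A : 'M[F]_(1,2) => A 0 1) hx; rewrite !mxE in h.
by apply: (etrans _ h); apply: eq_bigr => j _; rewrite !mxE.
Qed.

Section Nil.
Variable R : realType.

Lemma rv1 (x : 'rV[R]_1) : x = x 0 0 *: delta_mx 0 0.
Proof. by rewrite {1}(row_sum_delta x) big_ord1. Qed.

Lemma rv2 (x : 'rV[R]_2) : x = x 0 0 *: delta_mx 0 0 + x 0 1 *: delta_mx 0 1.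
Proof.
rewrite {1}(row_sum_delta x) big_ord_recr big_ord1 /=.
have -> : widen_ord (leqnSn 1) ord0 = 0 :> 'I_2 by apply/val_inj.
by have -> : ord_max = 1 :> 'I_2 by apply/val_inj.
Qed.

Lemma br1 (br : 'rV[R]_1 -> 'rV[R]_1 -> 'rV[R]_1) :
  is_lie_bracket br -> forall X Y, br X Y = 0.
Proof.
case=> hB hA _ X Y; rewrite (rv1 X) (rv1 Y) (bmZl hB) (bmZr hB) hA.
by rewrite !scaler0.
Qed.

Lemma br2 (br : 'rV[R]_2 -> 'rV[R]_2 -> 'rV[R]_2) :
  is_lie_bracket br -> lie_nilpotent br -> forall X Y, br X Y = 0.
Proof.
case=> hB hA _ [k hk].
have brS x y : br x y = - br y x.
  apply/eqP; rewrite -subr_eq0 opprK; apply/eqP.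
  have := hA (x + y); rewrite (bmDl hB) !(bmDr hB) !hA add0r addr0 => ->.
  by [].
set w := br (delta_mx 0 0) (delta_mx 0 1).
have hf X Y : br X Y = (X 0 0 * Y 0 1 - X 0 1 * Y 0 0) *: w.
  rewrite {1}(rv2 X) {1}(rv2 Y) !(bmDl hB, bmDr hB, bmZl hB, bmZr hB) !hA.
  rewrite [br (delta_mx 0 1) _]brS -/w !scaler0 addr0 add0r !scalerN !scalerA.
  by rewrite scalerBl [X 0 1 * _]mulrC.
case: (eqVneq w 0) => [w0|wn0].
  by move=> X Y; rewrite hf w0 scaler0.
exfalso.
pose X : 'rV[R]_2 := w 0 1 *: delta_mx 0 0 - w 0 0 *: delta_mx 0 1.
have hX0 : X 0 0 = w 0 1 by rewrite !mxE /=; lra.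
have hX1 : X 0 1 = - w 0 0 by rewrite !mxE /=; lra.
set l := w 0 0 ^+ 2 + w 0 1 ^+ 2.
have hXw : br X w = l *: w by rewrite hf hX0 hX1 /l; congr (_ *: _); ring.
have ln0 : l != 0.
  apply: contraNneq wn0 => hl; rewrite /l in hl; rewrite (rv2 w).
  have h0 : w 0 0 = 0 by apply/eqP; rewrite -sqrf_eq0; apply/eqP; nra.
  have h1 : w 0 1 = 0 by apply/eqP; rewrite -sqrf_eq0; apply/eqP; nra.
  by rewrite h0 h1 !scale0r addr0.
have hfold m : foldr br w (nseq m X) = l ^+ m *: w.
  elim: m => [|m IH] /=; first by rewrite expr0 scale1r.
  by rewrite IH (bmZr hB) hXw scalerA exprSr.
have := hk (nseq k X) w (size_nseq k X); rewrite hfold => /eqP.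
by rewrite scaler_eq0 expf_eq0 (negbTE ln0) andbF (negbTE wn0).
Qed.
End Nil.

Section Main.
Variables (R : realType) (n : nat)
    (br : 'rV[R]_n -> 'rV[R]_n -> 'rV[R]_n) (th : 'rV[R]_n -> 'rV[R]_n -> R)
    (nab : 'rV[R]_n -> 'rV[R]_n -> 'rV[R]_n)
    (nabt : ('rV[R]_n * R^o)%type -> ('rV[R]_n * R^o)%type -> ('rV[R]_n * R^o)%type).
Local Notation V := 'rV[R]_n.
Local Notation W := ('rV[R]_n * R^o)%type.
Hypotheses (brB : bilinear_map br) (brA : forall x, br x x = 0)
  (brJ : forall x y z, br x (br y z) + br y (br z x) + br z (br x y) = 0)
  (thB : bilinear_form th) (thS : forall x y, th x y = - th y x)
  (thN : forall x, (forall y, th x y = 0) -> x = 0)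
  (thC : forall x y z, th (br x y) z + th (br y z) x + th (br z x) y = 0)
  (Hnab : forall X Y Z, th (nab X Y) Z = - th Y (br X Z))
  (nB : bilinear_map nabt)
  (nT : forall x y, nabt x y - nabt y x = ext_bracket br th x y)
  (nL : forall x y z, nabt x (nabt y z) - nabt y (nabt x z) = nabt (ext_bracket br th x y) z)
  (Hext : forall X Y, (nabt (X, 0) (Y, 0)).1 = nab X Y).

Lemma peq (x y : W) : x.1 = y.1 -> x.2 = y.2 -> x = y.
Proof. by case: x; case: y => /= ? ? ? ? -> ->. Qed.
Lemma fstD (x y : W) : (x + y).1 = x.1 + y.1. Proof. by []. Qed.
Lemma sndD (x y : W) : (x + y).2 = x.2 + y.2. Proof. by []. Qed.
Lemma fstZ a (x : W) : (a *: x).1 = a *: x.1. Proof. by []. Qed.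
Lemma sndZ a (x : W) : (a *: x).2 = a * x.2. Proof. by []. Qed.
Lemma fstN (x : W) : (- x).1 = - x.1. Proof. by []. Qed.
Lemma sndN (x : W) : (- x).2 = - x.2. Proof. by []. Qed.
Lemma fst0 : (0 : W).1 = 0. Proof. by []. Qed.
Lemma snd0 : (0 : W).2 = 0. Proof. by []. Qed.
Definition prs := (fstD, sndD, fstZ, sndZ, fstN, sndN, fst0, snd0).

Definition mk (X : V) (a : R) : W := (X, a).
Lemma mk1 X a : (mk X a).1 = X. Proof. by []. Qed.
Lemma mk2 X a : (mk X a).2 = a. Proof. by []. Qed.
Definition T : W := mk 0 1.
Definition e0 (X : V) : W := mk X 0.
Lemma Hext' X Y : (nabt (e0 X) (e0 Y)).1 = nab X Y. Proof. exact: Hext. Qed.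
Definition D X := (nabt (e0 X) T).1.
Definition f X := (nabt (e0 X) T).2.
Definition bt X Y := (nabt (e0 X) (e0 Y)).2.
Definition v := (nabt T T).1.
Definition c := (nabt T T).2.

Lemma pdec X (a : R) : mk X a = e0 X + a *: T.
Proof. by apply: peq; rewrite !prs /= ?scaler0 ?addr0 ?add0r ?mulr1. Qed.

Lemma nabt_TX X : nabt T (e0 X) = nabt (e0 X) T.
Proof.
apply/eqP; rewrite -subr_eq0 nT /ext_bracket /= (bm0l brB) (bf0l thB).
by apply/eqP.
Qed.

Lemma full X a Y b : nabt (mk X a) (mk Y b) =
  mk (nab X Y + b *: D X + a *: D Y + (a * b) *: v) (bt X Y + b * f X + a * f Y + a * b * c).
Proof.
rewrite (pdec X a) (pdec Y b) !(bmDl nB, bmDr nB, bmZl nB, bmZr nB) nabt_TX.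
apply: peq; rewrite !prs ?mk1 ?mk2 ?Hext' -/(D X) -/(D Y) -/(f X) -/(f Y) -/v -/c -/(bt X Y) /=.
  by rewrite scalerA addrA.
by rewrite mulrA addrA.
Qed.

Lemma fullg x y : nabt x y =
  mk (nab x.1 y.1 + y.2 *: D x.1 + x.2 *: D y.1 + (x.2 * y.2) *: v)
     (bt x.1 y.1 + y.2 * f x.1 + x.2 * f y.1 + x.2 * y.2 * c).
Proof. by case: x => X a; case: y => Y b; rewrite -full. Qed.

Lemma ext_mk X a Y b : ext_bracket br th (mk X a) (mk Y b) = mk (br X Y) (th X Y).
Proof. by []. Qed.
Definition zs := (scale0r, scaler0, mul0r, mulr0, addr0, add0r, scale1r, mul1r, mulr1, subr0, sub0r, oppr0).

Lemma K1 X Y Z : nab X (nab Y Z) + bt Y Z *: D X - (nab Y (nab X Z) + bt X Z *: D Y)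
   = nab (br X Y) Z + th X Y *: D Z.
Proof.
have := nL (e0 X) (e0 Y) (e0 Z); rewrite /e0 ext_mk !fullg !mk1 !mk2 !zs.
by move/(congr1 fst); rewrite !prs !mk1.
Qed.

Lemma e00 : e0 0 = 0. Proof. by apply: peq. Qed.
Lemma nab0l Y : nab 0 Y = 0. Proof. by rewrite -Hext' e00 (bm0l nB). Qed.
Lemma nab0r Y : nab Y 0 = 0. Proof. by rewrite -Hext' e00 (bm0r nB). Qed.
Lemma D0 : D 0 = 0. Proof. by rewrite /D e00 (bm0l nB). Qed.
Lemma f0 : f 0 = 0. Proof. by rewrite /f e00 (bm0l nB). Qed.
Lemma bt0l Y : bt 0 Y = 0. Proof. by rewrite /bt e00 (bm0l nB). Qed.
Lemma bt0r Y : bt Y 0 = 0. Proof. by rewrite /bt e00 (bm0r nB). Qed.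
Definition zs2 := (nab0l, nab0r, D0, f0, bt0l, bt0r, (bm0l brB), (bm0r brB), (bf0l thB), (bf0r thB)).

Lemma KC1 X Y : D (nab X Y) + bt X Y *: v - (nab X (D Y) + f Y *: D X) = 0.
Proof.
have := nL T (e0 X) (e0 Y); rewrite /e0 /T ext_mk !fullg !mk1 !mk2 !zs !zs2 !zs.
by move/(congr1 fst); rewrite !prs !mk1.
Qed.
Lemma KC2 X Y : f (nab X Y) + bt X Y * c - (bt X (D Y) + f Y * f X) = 0.
Proof.
have := nL T (e0 X) (e0 Y); rewrite /e0 /T ext_mk !fullg !mk1 !mk2 !zs !zs2 !zs.
by move/(congr1 snd); rewrite !prs !mk2.
Qed.
Lemma KD1 X : D (D X) + f X *: v - (nab X v + c *: D X) = 0.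
Proof.
have := nL T (e0 X) T; rewrite /e0 /T ext_mk !fullg !mk1 !mk2 !zs !zs2 !zs.
by move/(congr1 fst); rewrite !prs !mk1.
Qed.

Lemma brS x y : br x y = - br y x.
Proof.
apply/eqP; rewrite -subr_eq0 opprK; apply/eqP.
have := brA (x + y); rewrite (bmDl brB) !(bmDr brB) !brA add0r addr0 => ->.
by [].
Qed.

Lemma e0lin k x y : e0 (k *: x + y) = k *: e0 x + e0 y.
Proof. by apply: peq; rewrite !prs /= ?mulr0 ?addr0. Qed.
Lemma Dlin k x y : D (k *: x + y) = k *: D x + D y.
Proof. by rewrite /D e0lin (bmDl nB) (bmZl nB). Qed.
Lemma flin k x y : f (k *: x + y) = k * f x + f y.
Proof. by rewrite /f e0lin (bmDl nB) (bmZl nB). Qed.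
Lemma btlinl k x y z : bt (k *: x + y) z = k * bt x z + bt y z.
Proof. by rewrite /bt e0lin (bmDl nB) (bmZl nB). Qed.
Lemma btlinr k x y z : bt z (k *: x + y) = k * bt z x + bt z y.
Proof. by rewrite /bt e0lin (bmDr nB) (bmZr nB). Qed.

Lemma curv X Y Z : nab X (nab Y Z) - nab Y (nab X Z) = nab (br X Y) Z.
Proof.
apply/eqP; rewrite -subr_eq0; apply/eqP; apply: thN => W.
rewrite !(bfBl thB) !Hnab.
have J : br Y (br X W) - br X (br Y W) + br (br X Y) W = 0.
  rewrite [br X W]brS (bmNr brB) [br (br X Y) W]brS -oppr0 -(brJ X Y W).
  by rewrite !opprD (addrC (- br Y _)).
have := congr1 (th Z) J; rewrite !(bfDr thB) !(bfNr thB) (bf0r thB) => H.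
by rewrite !opprK.
Qed.

Lemma B1 X Y Z : bt Y Z *: D X - bt X Z *: D Y = th X Y *: D Z.
Proof.
have := K1 X Y Z; rewrite -curv opprD addrACA.
by move/addrI.
Qed.

Lemma Dzero3 : (2 < n)%N -> forall Z, D Z = 0.
Proof.
move=> hn Z; apply/rowP => j; rewrite mxE.
case: (eqVneq (D Z 0 j) 0) => // hZ; exfalso.
have hdl : forall k x y, D (k *: x + y) 0 j = k * D x 0 j + D y 0 j.
  by move=> k x y; rewrite Dlin !mxE.
have [x [hx0 [hd ha]]] := ker2 (d := fun x => D x 0 j) (a := fun x => bt x Z) hn
  hdl (fun k x y => btlinl k x y Z).
move/eqP: hx0; apply; apply: thN => y.
have := congr1 (fun A : V => A 0 j) (B1 x y Z); rewrite !mxE /= hd ha mulr0 mul0r subr0.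
by move/esym/eqP; rewrite mulf_eq0 (negbTE hZ) orbF => /eqP.
Qed.

Lemma tors X Y : bt X Y - bt Y X = th X Y.
Proof.
have := nT (e0 X) (e0 Y); rewrite /e0 ext_mk !fullg !mk1 !mk2 !zs.
by move/(congr1 snd); rewrite !prs !mk2.
Qed.

Lemma thnz x : x != 0 -> exists y, th x y != 0.
Proof.
move=> hx; apply: NNPP => H; move/eqP: hx; apply; apply: thN => y.
apply: NNPP => hy; apply: H; exists y; exact/eqP.
Qed.

Lemma thxx x : th x x = 0.
Proof. have := thS x x; lra. Qed.

Lemma DZ k x : D (k *: x) = k *: D x.
Proof. by rewrite -[k *: x]addr0 Dlin D0 addr0. Qed.
Lemma DB x y : D (x - y) = D x - D y.
Proof. by rewrite -scaleN1r addrC Dlin scaleN1r addrC. Qed.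
Lemma btZr k x z : bt z (k *: x) = k * bt z x.
Proof. by rewrite -[k *: x]addr0 btlinr bt0r addr0. Qed.
Lemma btDr x y z : bt z (x + y) = bt z x + bt z y.
Proof. by rewrite -[x]scale1r btlinr mul1r scale1r. Qed.
Lemma btBr x y z : bt z (x - y) = bt z x - bt z y.
Proof. by rewrite -scaleN1r btDr btZr mulN1r. Qed.

Section Ab.
Hypothesis Hab : forall X Y, br X Y = 0.
Lemma nab0 X Y : nab X Y = 0.
Proof. by apply: thN => Z; rewrite Hnab Hab (bf0r thB) oppr0. Qed.
Lemma C1 X Y : bt X Y *: v = f Y *: D X.
Proof. by apply/eqP; rewrite -subr_eq0; have := KC1 X Y; rewrite !nab0 D0 !add0r => ->. Qed.
Lemma C2 X Y : bt X Y * c = bt X (D Y) + f Y * f X.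
Proof. by apply/eqP; rewrite -subr_eq0; have := KC2 X Y; rewrite !nab0 f0 add0r => ->. Qed.
Lemma D1 X : D (D X) + f X *: v = c *: D X.
Proof. by apply/eqP; rewrite -subr_eq0; have := KD1 X; rewrite !nab0 add0r => ->. Qed.

Variable Z0 : V.
Hypothesis hZ0 : D Z0 != 0.

Lemma v0 : v = 0.
Proof.
case: (eqVneq v 0) => // vn0; exfalso.
have thD : (forall X Y, th X Y *: D Z0 = 0) -> False.
  move=> H; move/eqP: hZ0; apply; apply: thN => y.
  by have := H (D Z0) y; move/eqP; rewrite scaler_eq0 (negbTE hZ0) orbF => /eqP.
case: (classic (exists Y0, f Y0 != 0)) => [[Y0 hY0] | hf].
  have hD X : D X = (bt X Y0 / f Y0) *: v.
    by rewrite mulrC -scalerA C1 scalerA mulVf // scale1r.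
  have hbt X Y : bt X Y = f Y * (bt X Y0 / f Y0).
    apply/eqP; rewrite -subr_eq0; have := C1 X Y; rewrite (hD X) scalerA.
    move/eqP; rewrite -subr_eq0 -scalerBl scaler_eq0 (negbTE vn0) orbF.
    by [].
  apply: thD => X Y; rewrite -B1 (hD X) (hD Y) (hbt Y Z0) (hbt X Z0) !scalerA.
  by rewrite mulrAC subrr.
have hf0 Y : f Y = 0 by apply: NNPP => hY; apply: hf; exists Y; exact/eqP.
have hbt X Y : bt X Y = 0.
  by have := C1 X Y; rewrite hf0 scale0r => /eqP; rewrite scaler_eq0 (negbTE vn0) orbF => /eqP.
by apply: thD => X Y; rewrite -tors !hbt subrr scale0r.
Qed.

Lemma f0' Y : f Y = 0.
Proof.
have := C1 Z0 Y; rewrite v0 scaler0 => /esym/eqP.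
by rewrite scaler_eq0 (negbTE hZ0) orbF => /eqP.
Qed.
Lemma C2' X Y : bt X (D Y) = c * bt X Y.
Proof. by rewrite mulrC C2 !f0' mulr0 addr0. Qed.
Lemma D1' X : D (D X) = c *: D X.
Proof. by rewrite -D1 v0 scaler0 addr0. Qed.

Lemma Dc Y : D Y = c *: Y.
Proof.
case: (eqVneq (D Y - c *: Y) 0) => [/eqP|wn0]; first by rewrite subr_eq0 => /eqP.
exfalso.
set w := D Y - c *: Y in wn0.
have hw1 W : bt W w = 0 by rewrite /w btBr btZr C2' subrr.
have hw2 : D w = 0 by rewrite /w DB DZ D1' subrr.
have hw3 W : bt w W = th w W by rewrite -tors hw1 subr0.
have hB Y' Z' : - (th w Z' *: D Y') = th w Y' *: D Z'.
  by have := B1 w Y' Z'; rewrite hw2 scaler0 add0r hw3.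
have [Z1 hZ1] := thnz wn0.
have hDZ1 : D Z1 = 0.
  have := hB Z1 Z1; move/eqP; rewrite eq_sym -addr_eq0 -scalerDl scaler_eq0.
  case/orP => [/eqP H|/eqP] //; exfalso; move/eqP: hZ1; apply; lra.
have := hB Z0 Z1; rewrite hDZ1 scaler0 => /eqP; rewrite oppr_eq0 scaler_eq0.
by rewrite (negbTE hZ1) (negbTE hZ0).
Qed.

Lemma cn0 : c != 0.
Proof. by apply: contraNneq hZ0 => hc; rewrite Dc hc scale0r. Qed.

Lemma final : False.
Proof.
have hI X Y Z : bt Y Z *: X - bt X Z *: Y = th X Y *: Z.
  apply: (scalerI cn0); rewrite scalerBr !scalerA ![c * _]mulrC -!scalerA -!Dc.
  exact: B1.
have hu : Z0 != 0 by apply: contraNneq hZ0 => ->; rewrite D0.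
have [Y hY] := thnz hu.
have h1 Z : bt Z0 Z = - th Z0 Z.
  have := congr1 (th Z0) (hI Z0 Y Z); rewrite (bfBr thB) !(bfZr thB) thxx mulr0 sub0r => H.
  apply/eqP; rewrite -subr_eq0 opprK; apply/eqP; apply: (mulIf hY).
  rewrite mul0r mulrDl; rewrite [th Z0 Y * _]mulrC in H; lra.
have h2 : bt Y Z0 = th Z0 Y.
  have := hI Z0 Y Z0; rewrite h1 thxx oppr0 scale0r subr0 => /eqP.
  by rewrite -subr_eq0 -scalerBl scaler_eq0 (negbTE hu) orbF subr_eq0 => /eqP.
have := tors Z0 Y; rewrite h1 h2 => H.
by move/eqP: hY; apply; lra.
Qed.
End Ab.

Lemma Dzero_ab : (forall X Y, br X Y = 0) -> forall Z, D Z = 0.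
Proof. by move=> Hab Z; case: (eqVneq (D Z) 0) => // hZ; exfalso; exact: (final Hab hZ). Qed.
End Main.

Lemma br_small (R : realType) n (br : 'rV[R]_n -> 'rV[R]_n -> 'rV[R]_n) :
  (n <= 2)%N -> is_lie_bracket br -> lie_nilpotent br -> forall X Y, br X Y = 0.
Proof.
case: n br => [|[|[|n]]] br hn hL hN //.
- move=> X Y; have -> : X = 0 by apply/rowP => -[].
  by case: hL => hB _ _; rewrite (bm0l hB).
- exact: br1 hL.
- exact: br2 hL hN.
Qed.

Unset Implicit Arguments.

Theorem mainTheorem4 (R : realType) (n : nat)
    (br : 'rV[R]_n -> 'rV[R]_n -> 'rV[R]_n) (th : 'rV[R]_n -> 'rV[R]_n -> R)
    (nab : 'rV[R]_n -> 'rV[R]_n -> 'rV[R]_n)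
    (nabt : ('rV[R]_n * R^o)%type -> ('rV[R]_n * R^o)%type -> ('rV[R]_n * R^o)%type) :
  is_lie_bracket br ->
  lie_nilpotent br ->
  is_symplectic_form br th ->
  (forall X Y Z, th (nab X Y) Z = - th Y (br X Z)) ->
  is_affine_structure (ext_bracket br th) nabt ->
  (forall X Y, (nabt (X, 0) (Y, 0)).1 = nab X Y) ->
  forall (X : 'rV[R]_n) (t : R), (nabt (X, 0) (0, t)).1 = 0.
Proof.
move=> hL hnil [thB thS thN thC] Hnab [nB nT nL] Hext X t.
case: (hL) => brB brA brJ.
have hD : forall Z, D nabt Z = 0.
  case: (leqP n 2) => hn.
    apply: (Dzero_ab brB brA brJ thB thS thN Hnab nB nT nL Hext).
    exact: br_small hn hL hnil.
  exact: (Dzero3 brB brA brJ thB thN Hnab nB nT nL Hext hn).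
change ((nabt (mk X 0) (mk 0 t)).1 = 0).
rewrite (full brB thB nB nT Hext) mk1 !hD (nab0r nB Hext).
by rewrite !scaler0 mul0r scale0r !addr0.
Qed.
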